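(* For every positive integer $n$ there exists a rooted tree with at most $n^{1.894}$ nodes that contains every binary rooted tree on $n$ nodes as a topological minor. Consequently, binary rooted trees on $n$ nodes admit an NCA labeling scheme with labels of at most $\lceil 1.894\log_2 n\rceil$ bits.
   Context: Trees are rooted and unordered, with edges directed from parent to child. The degree of a node is its number of children. A tree is binary if every node has at most two children. A rooted tree $T$ is a topological minor of a rooted tree $U$ if there is an injective map $f$ from the nodes of $T$ to the nodes of $U$ with $f(\mathsf{NCA}(u,v))=\mathsf{NCA}(f(u),f(v))$ for all nodes $u,v$ of $T$. Here $\mathsf{NCA}$ denotes the nearest common ancestor. Equivalently, $U$ contains as a subgraph a subdivision of $T$ that respects the root/edge directions. An NCA labeling scheme for a class of trees consists of an encoder and a decoder. The encoder assigns distinct binary strings (labels) to the nodes of each tree in the class. The decoder, given only the labels of two nodes $u,v$ of the same tree, outputs the label of $\mathsf{NCA}(u,v)$. *)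

(* Defs.v *)
From mathcomp Require Import all_boot.
From Stdlib Require Import Reals.
Set Implicit Arguments. Unset Strict Implicit. Unset Printing Implicit Defensive.

(* A rooted tree on a finite node type T is given by its parent map:
   par x = None iff x is the root, par x = Some p if p is the parent of x. *)

Definition up_iter (T : finType) (par : T -> option T) (k : nat) (x : T) : option T :=
  iter k (obind par) (Some x).

(* a is an ancestor of x (reflexive: every node is its own ancestor) *)
Definition ancestor (T : finType) (par : T -> option T) (a x : T) : Prop :=
  exists k, up_iter par k x = Some a.

(* par describes a rooted tree: exactly one root, and every node reaches
   the root after finitely many parent steps (hence no cycles, connected). *)
Definition is_rooted_tree (T : finType) (par : T -> option T) : Prop :=
  (exists r : T, forall x, par x = None <-> x = r) /\
  (forall x : T, exists k, up_iter par k x = None).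

Definition children (T : finType) (par : T -> option T) (v : T) : {set T} :=
  [set c | par c == Some v].

Definition is_binary (T : finType) (par : T -> option T) : Prop :=
  forall v : T, #|children par v| <= 2.

Definition is_nca (T : finType) (par : T -> option T) (u v w : T) : Prop :=
  ancestor par w u /\ ancestor par w v /\
  (forall a, ancestor par a u -> ancestor par a v -> ancestor par a w).

Definition top_minor (T U : finType) (parT : T -> option T) (parU : U -> option U) : Prop :=
  exists f : T -> U, injective f /\
    forall u v w : T, is_nca parT u v w -> is_nca parU (f u) (f v) (f w).

Definition log2 (x : R) : R := (ln x / ln 2)%R.

(* ceiling of a real: ceil x = - floor (- x), with floor y = up y - 1 *)
Definition Rceil (x : R) : Z := (1 - up (- x))%Z.

(* Main.v *)
Require Import Defs.
From mathcomp Require Import all_boot.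
From Stdlib Require Import Reals.
From mathcomp Require Import zify.
From Stdlib Require Import Lra ZArith.
Set Implicit Arguments. Unset Strict Implicit. Unset Printing Implicit Defensive.


Open Scope R_scope.

Definition al : R := 125 / 66.

Definition pw (x : R) : R := if Rlt_dec 0 x then Rpower x al else 0.

Lemma pw_pos x : 0 < x -> pw x = Rpower x al.
Proof. by rewrite /pw; case: Rlt_dec. Qed.

Lemma pw_npos x : x <= 0 -> pw x = 0.
Proof. rewrite /pw; case: Rlt_dec => //= h; lra. Qed.

Lemma Rpower_gt0 x y : 0 < Rpower x y.
Proof. rewrite /Rpower; apply: exp_pos. Qed.

Lemma pw_ge0 x : 0 <= pw x.
Proof. rewrite /pw; case: Rlt_dec => hh /=; [apply: Rlt_le; apply Rpower_gt0| lra]. Qed.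

Lemma pw_mono x y : 0 <= x <= y -> pw x <= pw y.
Proof.
move=> [h0 h1]; case: (Rle_lt_or_eq_dec _ _ h0) => hx.
- rewrite pw_pos // pw_pos; last lra.
  apply: Rle_Rpower_l; rewrite /al; lra.
- rewrite -hx pw_npos; [apply pw_ge0 | lra].
Qed.

Lemma pw_mul x y : 0 <= x -> 0 <= y -> pw (x * y) = pw x * pw y.
Proof.
move=> hx hy.
case: (Rle_lt_or_eq_dec _ _ hx) => hx'; last by rewrite -hx' Rmult_0_l (pw_npos (Rle_refl 0)) Rmult_0_l.
case: (Rle_lt_or_eq_dec _ _ hy) => hy'; last by rewrite -hy' Rmult_0_r (pw_npos (Rle_refl 0)) Rmult_0_r.
rewrite !pw_pos //; last by apply: Rmult_lt_0_compat.
by rewrite Rpower_mult_distr.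
Qed.

Lemma pw1 : pw 1 = 1.
Proof. rewrite pw_pos; last lra. by rewrite /Rpower ln_1 Rmult_0_r exp_0. Qed.

Lemma al_ge1 : 1 <= al.
Proof. rewrite /al; lra. Qed.

Lemma pw_le_id x : 0 <= x <= 1 -> pw x <= x.
Proof.
move=> [h0 h1]; case: (Rle_lt_or_eq_dec _ _ h0) => hx; last by rewrite -hx pw_npos; lra.
rewrite pw_pos // /Rpower.
have hl : ln x <= 0.
  case: (Rle_lt_or_eq_dec _ _ h1) => h; last by rewrite h ln_1; lra.
  by rewrite -ln_1; apply: Rlt_le; apply: ln_increasing.
rewrite -{2}(exp_ln x) //.
have : al * ln x <= ln x by have := al_ge1; nra.
move=> h; case: (Rle_lt_or_eq_dec _ _ h) => h'; last by rewrite h'; lra.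
by apply: Rlt_le; apply: exp_increasing.
Qed.

Lemma pw_ge_id x : 1 <= x -> x <= pw x.
Proof.
move=> h1; rewrite pw_pos; last lra. rewrite /Rpower.
have hl : 0 <= ln x.
  case: (Rle_lt_or_eq_dec _ _ h1) => h; last by rewrite -h ln_1; lra.
  by rewrite -ln_1; apply: Rlt_le; apply: ln_increasing; lra.
rewrite -{1}(exp_ln x); last lra.
have : ln x <= al * ln x by have := al_ge1; nra.
move=> h; case: (Rle_lt_or_eq_dec _ _ h) => h'; last by rewrite -h'; lra.
by apply: Rlt_le; apply: exp_increasing.
Qed.

Lemma pw_superadd x y : 0 <= x -> 0 <= y -> pw x + pw y <= pw (x + y).
Proof.
move=> hx hy.
case: (Rle_lt_or_eq_dec _ _ (Rplus_le_le_0_compat _ _ hx hy)) => hs; last first.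
  have ex : x = 0 by lra.
  have ey : y = 0 by lra.
  rewrite ex ey Rplus_0_r (pw_npos (Rle_refl 0)); lra.
have hs0 : 0 <= / (x + y) by apply: Rlt_le; apply: Rinv_0_lt_compat.
have hxs : 0 <= x / (x + y) by apply: Rmult_le_pos.
have hys : 0 <= y / (x + y) by apply: Rmult_le_pos.
have ex : pw x = pw (x + y) * pw (x / (x + y)).
  rewrite -pw_mul; try lra. congr pw; field; lra.
have ey : pw y = pw (x + y) * pw (y / (x + y)).
  rewrite -pw_mul; try lra. congr pw; field; lra.
have h1 : pw (x / (x + y)) <= x / (x + y).
  apply: pw_le_id; split=> //.
  apply (Rmult_le_reg_r (x + y)) => //; rewrite /Rdiv Rmult_assoc Rinv_l; lra.
have h2 : pw (y / (x + y)) <= y / (x + y).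
  apply: pw_le_id; split=> //.
  apply (Rmult_le_reg_r (x + y)) => //; rewrite /Rdiv Rmult_assoc Rinv_l; lra.
have hps := pw_ge0 (x + y).
have : x / (x + y) + y / (x + y) = 1 by field; lra.
rewrite ex ey; nra.
Qed.

Lemma pw_as_root q : 0 < q -> pw q = Rpower (q ^ 125) (/ 66).
Proof.
move=> hq; rewrite pw_pos // -(@Rpower_pow 125 q hq) Rpower_mult /al.
congr Rpower. rewrite /INR. lra.
Qed.

Lemma root66 u : 0 < u -> u = Rpower (u ^ 66) (/ 66).
Proof.
move=> hu; rewrite -(@Rpower_pow 66 u hu) Rpower_mult.
have -> : INR 66 * / 66 = 1 by rewrite /INR; lra.
by rewrite Rpower_1.
Qed.

Lemma pw_le_num q u : 0 < q -> 0 < u -> q ^ 125 <= u ^ 66 -> pw q <= u.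
Proof.
move=> hq hu h; rewrite pw_as_root // (root66 hu).
apply: Rle_Rpower_l; first lra. split=> //; by apply: pow_lt.
Qed.

Lemma pw_ge_num q u : 0 < q -> 0 < u -> u ^ 66 <= q ^ 125 -> u <= pw q.
Proof.
move=> hq hu h; rewrite pw_as_root // {1}(root66 hu).
apply: Rle_Rpower_l; first lra. split=> //; by apply: pow_lt.
Qed.

Lemma frac_pow (a b : Z) (n : nat) : IZR b <> 0 -> (IZR a / IZR b) ^ n = IZR (a ^ Z.of_nat n) / IZR (b ^ Z.of_nat n).
Proof. move=> hb; by rewrite -!pow_IZR /Rdiv Rpow_mult_distr pow_inv. Qed.

Lemma frac_le (A B C D : Z) : (0 < B)%Z -> (0 < D)%Z -> (A * D <= C * B)%Z ->
  IZR A / IZR B <= IZR C / IZR D.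
Proof.
move=> hB hD h.
have hB' : 0 < IZR B by apply: IZR_lt.
have hD' : 0 < IZR D by apply: IZR_lt.
have h' := IZR_le _ _ h. rewrite !mult_IZR in h'.
apply (Rmult_le_reg_r (IZR B * IZR D)); first by apply: Rmult_lt_0_compat.
have -> : IZR A / IZR B * (IZR B * IZR D) = IZR A * IZR D by field; lra.
have -> : IZR C / IZR D * (IZR B * IZR D) = IZR C * IZR B by field; lra.
done.
Qed.

Lemma num_y : pw (1 / 2) <= 269072 / 1000000.
Proof. apply: pw_le_num; lra. Qed.
Lemma num_p3 : pw (3 / 10) <= 102259 / 1000000.
Proof. apply: pw_le_num; lra. Qed.
Lemma num_p7 : pw (7 / 10) <= 508892 / 1000000.
Proof. apply: pw_le_num; lra. Qed.
Lemma num_15 : 215 / 100 <= pw (3 / 2).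
Proof. apply: pw_ge_num; lra. Qed.
Lemma num_3 : 4 <= pw 3.
Proof. apply: pw_ge_num; lra. Qed.

Lemma ln_lb u : 0 <= u -> u / (1 + u) <= ln (1 + u).
Proof.
move=> hu.
have hz : 0 < / (1 + u) by apply: Rinv_0_lt_compat; lra.
have h := exp_ineq1_le (ln (/ (1 + u))).
rewrite exp_ln // ln_Rinv in h; last lra.
have -> : u / (1 + u) = 1 - / (1 + u) by field; lra.
lra.
Qed.

Lemma pw_1u u : 0 <= u -> 1 + al * (u / (1 + u)) <= pw (1 + u).
Proof.
move=> hu; rewrite pw_pos; last lra.
rewrite /Rpower.
have h1 := ln_lb hu.
have h2 := exp_ineq1_le (al * ln (1 + u)).
have := al_ge1. nra.
Qed.

Lemma lemL x : 3 / 2 <= x -> 1 + pw x <= pw (x + 1 / 2).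
Proof.
move=> hx.
have hx0 : 0 < x by lra.
have e1 : x + 1 / 2 = x * (1 + / (2 * x)) by field; lra.
have hu : 0 <= / (2 * x) by apply: Rlt_le; apply: Rinv_0_lt_compat; lra.
rewrite e1 pw_mul; [|lra|lra].
have h1 := pw_1u hu.
have e2 : / (2 * x) / (1 + / (2 * x)) = / (2 * x + 1) by field; lra.
rewrite e2 in h1.
have e3 : x = 3 / 2 * (2 * x / 3) by field.
have h3 : pw x >= 215 / 100 * (2 * x / 3).
  rewrite {1}e3 pw_mul; [|lra|lra].
  have := num_15. have := pw_ge_id (x := 2 * x / 3 ). move=> h; have {}h := h ltac:(lra).
  have := pw_ge0 (2 * x / 3). nra.
have hpx : 0 <= pw x by apply: pw_ge0.
have hinv : / (2 * x + 1) * (2 * x + 1) = 1 by field; lra.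
have hpos : 0 < / (2 * x + 1) by apply: Rinv_0_lt_compat; lra.
have : al * pw x >= 2 * x + 1 by rewrite /al; nra.
move=> h4.
have : pw x * (al * / (2 * x + 1)) >= 1.
  have -> : pw x * (al * / (2 * x + 1)) = (al * pw x) * / (2 * x + 1) by ring.
  nra.
nra.
Qed.

Definition yy := pw (1 / 2).
Definition cc := / (1 - 2 * yy).

Lemma yy_bounds : 0 <= yy <= 269072 / 1000000.
Proof. split; [apply: pw_ge0 | apply: num_y]. Qed.

Lemma cc_eq : 2 * cc * yy + 1 = cc.
Proof. have := yy_bounds; rewrite /cc => h. field. lra. Qed.

Lemma cc_pos : 0 < cc.
Proof. have := yy_bounds; rewrite /cc => h. apply: Rinv_0_lt_compat; lra. Qed.

Lemma pw_half x : 0 <= x -> pw (x / 2) = yy * pw x.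
Proof. move=> hx; rewrite /yy -pw_mul; [congr pw; field | lra | lra]. Qed.

Lemma Q_le1 : cc * pw (3 / 10) + pw (7 / 10) + yy <= 1.
Proof.
have hy := yy_bounds. have h3 := num_p3. have h7 := num_p7.
have p3 := pw_ge0 (3/10).
rewrite /cc.
set y := yy in hy *.
have hd : 0 < 1 - 2 * y by lra.
have -> : / (1 - 2 * y) * pw (3 / 10) = pw (3 / 10) / (1 - 2 * y) by rewrite /Rdiv Rmult_comm.
apply (Rmult_le_reg_r (1 - 2 * y)) => //.
have -> : (pw (3 / 10) / (1 - 2 * y) + pw (7 / 10) + y) * (1 - 2 * y)
   = pw (3 / 10) + (pw (7 / 10) + y) * (1 - 2 * y) by field; lra.
have hh : (269072 / 1000000 - y) * (1982 / 1000 - 2 * (y + 269072 / 1000000)) >= 0 by nra.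
nra.
Qed.

Lemma main_ineq (N m k t : R) : 4 <= N -> 0 <= m <= 3 * N / 10 -> 0 <= k <= (N - 1) / 2 ->
  0 <= t <= 7 * N / 10 -> cc * pw m + 1 + pw k + pw t <= pw N.
Proof.
move=> hN hm hk ht.
have hm' : pw m <= pw (3 / 10) * pw N.
  rewrite -pw_mul; [apply: pw_mono; lra | lra | lra].
have ht' : pw t <= pw (7 / 10) * pw N.
  rewrite -pw_mul; [apply: pw_mono; lra | lra | lra].
have hk' : pw k <= pw ((N - 1) / 2) by apply: pw_mono; lra.
have hL := lemL (x := (N - 1) / 2) ltac:(lra).
have e : (N - 1) / 2 + 1 / 2 = N / 2 by field.
rewrite e (@pw_half N) in hL; last lra.
have hQ := Q_le1. have hc := cc_pos. have hpN := pw_ge0 N.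
have h1 := Rmult_le_compat_l cc _ _ (Rlt_le _ _ hc) hm'.
have h2 : (1 - (cc * pw (3 / 10) + pw (7 / 10) + yy)) * pw N >= 0.
  apply: Rle_ge; apply: Rmult_le_pos; lra.
lra.
Qed.
Lemma num_2 : pw 2 <= 4.
Proof. apply: pw_le_num; lra. Qed.
Lemma num_3' : 6 <= pw 3.
Proof. apply: pw_ge_num; lra. Qed.

Close Scope R_scope.


Inductive bt := BE | BN of bt & bt.

Fixpoint bsize t := match t with BE => 0 | BN a b => (bsize a + bsize b).+1 end.

Inductive emb : bt -> bt -> Prop :=
| embE u : emb BE u
| embR a b c d : emb a c -> emb b d -> emb (BN a b) (BN c d)
| embRs a b c d : emb a d -> emb b c -> emb (BN a b) (BN c d)
| embL t c d : emb t c -> emb t (BN c d)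
| embRt t c d : emb t d -> emb t (BN c d).

Fixpoint Gpf (f : nat) (B : nat -> bt) (m : nat) (tl : bt) : bt :=
  match f with
  | 0 => tl
  | f'.+1 => if m is 0 then tl else Gpf f' B m./2 (BN (B m.-1) (Gpf f' B m./2 tl))
  end.

Definition tt n := (7 * n) %/ 10.

Fixpoint Bf (f : nat) (n : nat) : bt :=
  match f with
  | 0 => BE
  | f'.+1 => if n is 0 then BE else
      Gpf n (Bf f') (n - tt n - 1) (BN (Bf f' (n.-1)./2) (Bf f' (tt n)))
  end.

Lemma emb_tail f B m tl t : emb t tl -> emb t (Gpf f B m tl).
Proof.
elim: f m tl => [|f IH] m tl h; first by [].
case: m => [|m]; first by [].
rewrite /=. apply: (IH); apply: embRt; exact: IH.
Qed.

Inductive PD : bt -> nat -> bt -> Prop :=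
| PD0 t : PD t 0 t
| PDl L X w t' : PD X w t' -> PD (BN X L) (bsize L + w).+1 t'
| PDr L X w t' : PD X w t' -> PD (BN L X) (bsize L + w).+1 t'.

Lemma PD_0 T T' : PD T 0 T' -> T = T'.
Proof. by move=> h; inversion h. Qed.

Lemma PD_split T w T' h : PD T w T' -> h < w ->
  exists w1 L X w2 T1, [/\ PD T w1 T1, (T1 = BN X L \/ T1 = BN L X), PD X w2 T',
     w1 <= h < w1 + (bsize L).+1 & w = w1 + (bsize L).+1 + w2].
Proof.
move=> hp; elim: hp h => [t|L X w0 t' hp IH|L X w0 t' hp IH] h hw.
- by [].
- case: (ltnP h (bsize L).+1) => hL.
  + exists 0, L, X, w0, (BN X L); split; [exact: PD0| by left | done | lia | lia].
  + have [w1 [L' [X' [w2 [T1 [p1 p2 p3 p4 p5]]]]]] := IH (h - (bsize L).+1) ltac:(lia).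
    exists ((bsize L + w1).+1), L', X', w2, T1; split=> //; [exact: PDl | lia | lia].
- case: (ltnP h (bsize L).+1) => hL.
  + exists 0, L, X, w0, (BN L X); split; [exact: PD0| by right | done | lia | lia].
  + have [w1 [L' [X' [w2 [T1 [p1 p2 p3 p4 p5]]]]]] := IH (h - (bsize L).+1) ltac:(lia).
    exists ((bsize L + w1).+1), L', X', w2, T1; split=> //; [exact: PDr | lia | lia].
Qed.

Lemma G_univ B M : (forall k, k < M -> forall T, bsize T <= k -> emb T (B k)) ->
  forall f m tl T w T', m <= f -> m <= M -> PD T w T' -> w <= m -> emb T' tl ->
  emb T (Gpf f B m tl).
Proof.
move=> HB; elim=> [|f IH] m tl T w T' hmf hmM hp hwm he.
- have m0 : m = 0 by lia.
  subst m; have w0 : w = 0 by lia. subst w; by rewrite (PD_0 hp).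
- case: m hmf hmM hwm => [|m] hmf hmM hwm /=.
  + have w0 : w = 0 by lia. subst w; by rewrite (PD_0 hp).
  + set h := m.+1./2.
    have hh : h <= f by rewrite /h; lia.
    have hhM : h <= M by rewrite /h; lia.
    case: (leqP w h) => hw.
    * apply: (IH h _ T w T') => //. apply: embRt; exact: emb_tail.
    * have [w1 [L [X [w2 [T1 [p1 p2 p3 p4 p5]]]]]] := PD_split hp hw.
      apply: (IH h _ T w1 T1) => //; first lia.
      have eX : emb X (Gpf f B h tl).
        apply: (IH h _ X w2 T') => //. rewrite /h in p4 *; lia.
      have eL : emb L (B m) by apply: HB; lia.
      case: p2 => ->; [exact: embRs | exact: embR].
Qed.

Lemma heavy t T : t < bsize T -> exists w T1 a b,
  [/\ PD T w T1, T1 = BN a b, bsize a <= t, bsize b <= t & t < bsize T1 /\ w + bsize T1 = bsize T].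
Proof.
elim: T => [|a IHa b IHb] //= ht.
case: (leqP (bsize a) t) => ha; case: (leqP (bsize b) t) => hb.
- exists 0, (BN a b), a, b; split; [exact: PD0| done | done | done | rewrite /=; lia].
- have [w [T1 [a' [b' [p1 p2 p3 p4 [p5 p6]]]]]] := IHb hb.
  exists ((bsize a + w).+1), T1, a', b'; split; [exact: PDr | done | done | done | lia].
- have [w [T1 [a' [b' [p1 p2 p3 p4 [p5 p6]]]]]] := IHa ha.
  exists ((bsize b + w).+1), T1, a', b'; split; [exact: PDl | done | done | done | lia].
- have [w [T1 [a' [b' [p1 p2 p3 p4 [p5 p6]]]]]] := IHa ha.
  exists ((bsize b + w).+1), T1, a', b'; split; [exact: PDl | done | done | done | lia].
Qed.

Lemma tt_facts n : 0 < n -> tt n < n /\ 10 * (n - tt n - 1) + 1 <= 3 * n /\ 10 * tt n <= 7 * n.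
Proof.
move=> hn; rewrite /tt.
have e := divn_eq (7 * n) 10. have r := ltn_pmod (7 * n) (isT : 0 < 10).
lia.
Qed.

Lemma B_univ f n T : n < f -> bsize T <= n -> emb T (Bf f n).
Proof.
elim: f n T => [|f IH] n T //= hnf hT.
case: n hnf hT => [|n] hnf hT.
  by case: T hT => //= *; apply: embE.
set n1 := n.+1.
have [ht1 [ht2 ht3]] := tt_facts (isT : 0 < n1).
case: (leqP (bsize T) (tt n1)) => hT'.
  apply: emb_tail; apply: embRt; apply: IH => //; lia.
have [w [T1 [a [b [p1 p2 p3 p4 [p5 p6]]]]]] := heavy hT'.
subst T1; rewrite /= in p5 p6.
have HB : forall k, k < n1 -> forall T0, bsize T0 <= k -> emb T0 (Bf f k).
  move=> k hk T0 hT0; apply: IH => //; lia.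
have eT1 : emb (BN a b) (BN (Bf f n1.-1./2) (Bf f (tt n1))).
  case: (leqP (bsize a) (bsize b)) => hab.
  + apply: embR; apply: IH; rewrite -?divn2; lia.
  + apply: embRs; apply: IH; rewrite -?divn2; lia.
apply: (G_univ HB (T' := BN a b) (w := w)) => //; lia.
Qed.


Fixpoint gsz (f : nat) (B : nat -> bt) (m : nat) : nat :=
  match f with
  | 0 => 0
  | f'.+1 => if m is 0 then 0 else gsz f' B m./2 + gsz f' B m./2 + (bsize (B m.-1)).+1
  end.

Lemma Gpf_size f B m tl : bsize (Gpf f B m tl) = gsz f B m + bsize tl.
Proof.
elim: f m tl => [|f IH] m tl //=; case: m => [|m] //=.
rewrite IH /= IH; lia.
Qed.

Lemma INR_leq (a b : nat) : a <= b -> (INR a <= INR b)%R.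
Proof. by move=> h; apply: le_INR; apply/leP. Qed.

Lemma INR_addn a b : INR (a + b) = (INR a + INR b)%R.
Proof. by rewrite -plusE plus_INR. Qed.

Lemma INR_muln a b : INR (a * b) = (INR a * INR b)%R.
Proof. by rewrite -multE mult_INR. Qed.

Lemma INR_S a : INR a.+1 = (INR a + 1)%R.
Proof. by rewrite S_INR. Qed.

Open Scope R_scope.

Lemma INR2 : INR 2 = 2. Proof. simpl; lra. Qed.
Lemma INR3 : INR 3 = 3. Proof. simpl; lra. Qed.
Lemma INR4 : INR 4 = 4. Proof. simpl; lra. Qed.
Lemma INR7 : INR 7 = 7. Proof. simpl; lra. Qed.
Lemma INR10 : INR 10 = 10. Proof. simpl; lra. Qed.
Lemma INR1 : INR 1 = 1. Proof. simpl; lra. Qed.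
Ltac INRc := rewrite ?INR1 ?INR2 ?INR3 ?INR4 ?INR7 ?INR10.

Lemma gsz_bound (B : nat -> bt) (f m : nat) : (m <= f)%nat -> (forall k : nat, (k < m)%nat -> INR (bsize (B k)) <= pw (INR k)) ->
  INR (gsz f B m) <= cc * pw (INR m).
Proof.
elim: f m => [|f IH] m hmf HB /=.
  have -> : m = 0%nat by lia. rewrite /= pw_npos; lra.
case: m hmf HB => [|m] hmf HB.
  rewrite /= pw_npos; lra.
set h := (m.+1)./2.
have hh : (h <= f)%nat by rewrite /h; lia.
have IHh := IH h hh (fun k hk => HB k ltac:(rewrite /h in hk; lia)).
have hB := HB m (ltnSn m).
rewrite !INR_addn INR_S.
have h2 : (2 * INR h <= INR m.+1)%R.
  have : (2 * h <= m.+1)%nat by rewrite /h -divn2; lia.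
  move/INR_leq; rewrite INR_muln; INRc; lra.
have hph : pw (INR h) <= yy * pw (INR m.+1).
  rewrite -pw_half; last by apply: pos_INR.
  apply: pw_mono; split; [apply: pos_INR | lra].
have hs : 1 + pw (INR m) <= pw (INR m.+1).
  rewrite -{1}pw1 INR_S Rplus_comm; apply: pw_superadd; [apply: pos_INR | lra].
have hc := cc_pos. have := cc_eq.
have h3 := Rmult_le_compat_l _ _ _ (Rlt_le _ _ hc) hph.
move=> e; rewrite -[m.+1.-1]/m.
have e2 := Rmult_eq_compat_r (pw (INR m.+1)) _ _ e.
lra.
Qed.

Lemma B_size (f n : nat) : (n < f)%nat -> INR (bsize (Bf f n)) <= pw (INR n).
Proof.
elim: f n => [|f IH] n //= hnf.
case: n hnf => [|n] hnf.
  rewrite /= pw_npos; lra.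
set n1 := n.+1.
have [ht1 [ht2 ht3]] := tt_facts (isT : (0 < n1)%nat).
rewrite Gpf_size [bsize (BN _ _)]/=.
set m := (n1 - tt n1 - 1)%nat.
set k := (n1.-1)./2.
have hG := gsz_bound (B := Bf f) (f := n1) (m := m) ltac:(rewrite /m; lia)
  (fun k hk => IH k ltac:(rewrite /m in hk; lia)).
have hk : INR (bsize (Bf f k)) <= pw (INR k) by apply: IH; rewrite /k -divn2; lia.
have ht : INR (bsize (Bf f (tt n1))) <= pw (INR (tt n1)) by apply: IH; lia.
rewrite INR_addn INR_S INR_addn.
have key : cc * pw (INR m) + 1 + pw (INR k) + pw (INR (tt n1)) <= pw (INR n1).
  case: (leqP 4 n1) => h4.
  - apply: main_ineq.
    + by have := INR_leq h4; INRc; lra.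
    + split; first apply: pos_INR.
      have := INR_leq ht2; rewrite -/m INR_addn !INR_muln; INRc; lra.
    + split; first apply: pos_INR.
      have : (2 * k + 1 <= n1)%nat by rewrite /k -divn2; lia.
      move/INR_leq; rewrite INR_addn INR_muln; INRc; lra.
    + split; first apply: pos_INR.
      have := INR_leq ht3; rewrite !INR_muln; INRc; lra.
  - have hm0 : m = 0%nat by rewrite /m /tt; lia.
    rewrite hm0 (pw_npos (Rle_refl (INR 0))) Rmult_0_r Rplus_0_l.
    have [e|[e|e]] : n1 = 1%nat \/ n1 = 2%nat \/ n1 = 3%nat by lia.
    + have ek : k = 0%nat by rewrite /k -divn2 e.
      have et : tt n1 = 0%nat by rewrite e.
      rewrite ek et e (pw_npos (Rle_refl (INR 0))) INR1 pw1; lra.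
    + have ek : k = 0%nat by rewrite /k -divn2 e.
      have et : tt n1 = 1%nat by rewrite e.
      rewrite ek et e (pw_npos (Rle_refl (INR 0))) INR1 pw1 INR2.
      have := pw_ge_id (x := 2) ltac:(lra); lra.
    + have ek : k = 1%nat by rewrite /k -divn2 e.
      have et : tt n1 = 2%nat by rewrite e.
      rewrite ek et e INR1 pw1 INR2 INR3.
      have := num_2; have := num_3'; lra.
have hc := cc_pos.
have := Rmult_le_compat_l _ _ _ (Rlt_le _ _ hc) hG.
lra.
Qed.

Close Scope R_scope.


Fixpoint nodes (t : bt) : seq (seq bool) :=
  match t with
  | BE => [::]
  | BN a b => [::] :: (map (cons false) (nodes a) ++ map (cons true) (nodes b))
  end.



Lemma mem_cons_map (c d : bool) p (s : seq (seq bool)) :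
  (c :: p \in map (cons d) s) = (c == d) && (p \in s).
Proof.
apply/mapP/andP => [[q hq [-> ->]] | [/eqP -> hp]]; first by [].
by exists p.
Qed.

Lemma nil_notin_map d (s : seq (seq bool)) : ([::] \in map (cons d) s) = false.
Proof. by apply/mapP => [[q _]]. Qed.

Lemma mem_nodesN a b w : (w \in nodes (BN a b)) =
  match w with [::] => true | false :: p => p \in nodes a | true :: p => p \in nodes b end.
Proof.
rewrite /= in_cons mem_cat.
case: w => [|[] p] //=; rewrite !mem_cons_map //=. all: try by rewrite nil_notin_map. all: by rewrite ?orbF.
Qed.

Lemma nodes_uniq t : uniq (nodes t).
Proof.
elim: t => [|a IHa b IHb] //=.
rewrite cat_uniq !map_inj_uniq //; try by move=> x y [].
rewrite IHa IHb /= andbT mem_cat !nil_notin_map /=.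
apply/hasPn => w /mapP [q _ ->]; rewrite mem_cons_map.
done.
Qed.

Lemma size_nodes t : size (nodes t) = bsize t.
Proof. by elim: t => [|a IHa b IHb] //=; rewrite size_cat !size_map IHa IHb. Qed.

Lemma nodes_take t w n : w \in nodes t -> take n w \in nodes t.
Proof.
elim: t w n => [|a IHa b IHb] w n //.
rewrite !mem_nodesN; case: n => [|n]; first by rewrite take0.
by case: w => [|[] p] //= h; [apply: IHb | apply: IHa].
Qed.

Lemma nodes_nil t : t <> BE -> [::] \in nodes t.
Proof. by case: t. Qed.

Fixpoint lcp (p q : seq bool) : seq bool :=
  match p, q with
  | x :: p', y :: q' => if x == y then x :: lcp p' q' else [::]
  | _, _ => [::]
  end.

Lemma lcp_prefl p q : prefix (lcp p q) p.
Proof.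
elim: p q => [|x p IH] [|y q] //=; case: eqP => //= _; by rewrite eqxx IH.
Qed.

Lemma lcp_prefr p q : prefix (lcp p q) q.
Proof.
elim: p q => [|x p IH] [|y q] //=; case: eqP => //= ->; by rewrite eqxx IH.
Qed.

Lemma lcp_max r p q : prefix r p -> prefix r q -> prefix r (lcp p q).
Proof.
elim: r p q => [|z r IH] [|x p] [|y q] //=.
  by move=> _ _; apply: prefix0s.
move=> /andP [/eqP e1 h1] /andP [/eqP e2 h2].
subst; rewrite eqxx /= eqxx; exact: IH.
Qed.

Lemma prefix_antisym (p q : seq bool) : prefix p q -> prefix q p -> p = q.
Proof.
move=> /prefixP [s1 e1] /prefixP [s2 e2].
have : size q = size p + size s1 by rewrite e1 size_cat.
have : size p = size q + size s2 by rewrite e2 size_cat.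
move=> h1 h2; have s10 : s1 = [::] by apply/nilP; rewrite /nilp; lia.
by rewrite e1 s10 cats0.
Qed.

Lemma lcp_cons x p q : lcp (x :: p) (x :: q) = x :: lcp p q.
Proof. by rewrite /= eqxx. Qed.

Definition good_map (t u : bt) (f : seq bool -> seq bool) :=
  [/\ forall p, p \in nodes t -> f p \in nodes u,
      forall p q, p \in nodes t -> q \in nodes t -> f (lcp p q) = lcp (f p) (f q)
    & forall p q, p \in nodes t -> q \in nodes t -> f p = f q -> p = q].

Lemma emb_map t u : emb t u -> exists f, good_map t u f.
Proof.
elim=> [u0|a b c d _ [fa [A1 A2 A3]] _ [fb [B1 B2 B3]]
       |a b c d _ [fa [A1 A2 A3]] _ [fb [B1 B2 B3]]
       |t0 c d _ [g [G1 G2 G3]] | t0 c d _ [g [G1 G2 G3]]].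
- by exists (fun w => w); split.
- exists (fun w => match w with [::] => [::] | false :: p => false :: fa p | true :: p => true :: fb p end).
  split.
  + move=> [|[] p]; rewrite !mem_nodesN //; [exact: B1 | exact: A1].
  + move=> [|[] p] [|[] q]; rewrite !mem_nodesN //= => hp hq; rewrite ?B2 ?A2 //.
  + move=> [|[] p] [|[] q]; rewrite !mem_nodesN //= => hp hq [] e; congr cons; [exact: B3 | exact: A3].
- exists (fun w => match w with [::] => [::] | false :: p => true :: fa p | true :: p => false :: fb p end).
  split.
  + move=> [|[] p]; rewrite !mem_nodesN //; [exact: B1 | exact: A1].
  + move=> [|[] p] [|[] q]; rewrite !mem_nodesN //= => hp hq; rewrite ?B2 ?A2 //.
  + move=> [|[] p] [|[] q]; rewrite !mem_nodesN //= => hp hq [] e; congr cons; [exact: B3 | exact: A3].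
- exists (fun w => false :: g w); split.
  + by move=> p hp; rewrite mem_nodesN; apply: G1.
  + by move=> p q hp hq; rewrite lcp_cons G2.
  + by move=> p q hp hq [] e; apply: G3.
- exists (fun w => true :: g w); split.
  + by move=> p hp; rewrite mem_nodesN; apply: G1.
  + by move=> p q hp hq; rewrite lcp_cons G2.
  + by move=> p q hp hq [] e; apply: G3.
Qed.


Definition chi (L : seq (seq bool)) (i : 'I_(size L)) : seq bool := nth [::] L i.

Definition parL (L : seq (seq bool)) (i : 'I_(size L)) : option 'I_(size L) :=
  if chi i is [::] then None
  else Some (insubd i (index (take (size (chi i)).-1 (chi i)) L)).

Lemma chi_mem (L : seq (seq bool)) (i : 'I_(size L)) : chi i \in L.
Proof. exact: mem_nth. Qed.

Lemma chi_insubd L (i0 : 'I_(size L)) w : w \in L -> chi (insubd i0 (index w L)) = w.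
Proof. by move=> h; rewrite /chi val_insubd index_mem h nth_index. Qed.

Lemma chi_inj (L : seq (seq bool)) : uniq L -> injective (@chi L).
Proof.
move=> hu i j e; apply: val_inj; apply/eqP.
by rewrite -(nth_uniq [::] (ltn_ord i) (ltn_ord j) hu); apply/eqP.
Qed.

Definition pclosed (L : seq (seq bool)) := forall w n, w \in L -> take n w \in L.

Lemma up_iterL L (HP : pclosed L) k (i : 'I_(size L)) :
  (k <= size (chi i) -> exists j, up_iter (@parL L) k i = Some j /\ chi j = take (size (chi i) - k) (chi i))
  /\ (size (chi i) < k -> up_iter (@parL L) k i = None).
Proof.
elim: k => [|k [IH1 IH2]].
  split=> // _; exists i; split=> //; by rewrite subn0 take_size.
split.
- move=> hk; have [j [e1 e2]] := IH1 (ltnW hk).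
  rewrite /up_iter iterS -/(up_iter _ k i) e1 /= /parL.
  case e3: (chi j) => [|b w].
    exfalso; have := f_equal size e2; rewrite e3 size_take; case: ifP => /= ? ?; lia.
  rewrite -e3; eexists; split; first reflexivity.
  rewrite chi_insubd; last by apply: HP; apply: chi_mem.
  rewrite e2 size_takel ?leq_subr // take_takel ?leq_pred //; congr take; lia.
- move=> hk; rewrite /up_iter iterS -/(up_iter _ k i).
  case: (ltnP (size (chi i)) k) => h; first by rewrite IH2.
  have [j [e1 e2]] := IH1 h; rewrite e1 /= /parL.
  have e0 : size (chi i) - k = 0 by lia.
  by rewrite e2 e0 take0.
Qed.

Lemma ancL L (HU : uniq L) (HP : pclosed L) (a x : 'I_(size L)) :
  ancestor (@parL L) a x <-> prefix (chi a) (chi x).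
Proof.
split.
- move=> [k e].
  case: (leqP k (size (chi x))) => hk.
  + have [e1 _] := up_iterL HP k x.
    have [j' [e3 e4]] := e1 hk. rewrite e in e3; case: e3 => ->. rewrite e4; exact: prefix_take.
  + have [_ e3] := up_iterL HP k x; by rewrite e3 in e.
- move=> hp; exists (size (chi x) - size (chi a)).
  have [e1 _] := up_iterL HP (size (chi x) - size (chi a)) x.
  have hs := size_prefix hp.
  have [j' [e3 e4]] := e1 (leq_subr _ _).
  rewrite e3; congr Some; apply: (chi_inj HU).
  rewrite e4 subKn //.
  by move: hp; rewrite prefixE => /eqP.
Qed.

Lemma rootedL L (HU : uniq L) (HP : pclosed L) (r : 'I_(size L)) :
  chi r = [::] -> is_rooted_tree (@parL L).
Proof.
move=> hr; split.
- exists r => x; split.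
  + rewrite /parL; case e: (chi x) => [|b w] // _.
    by apply: (chi_inj HU); rewrite e hr.
  + by move=> ->; rewrite /parL hr.
- move=> x; exists (size (chi x)).+1.
  by have [_ ->] := up_iterL HP (size (chi x)).+1 x.
Qed.

Lemma ncaL L (HU : uniq L) (HP : pclosed L) (x y z : 'I_(size L)) :
  chi z = lcp (chi x) (chi y) -> is_nca (@parL L) x y z.
Proof.
move=> e; split; [|split].
- apply/ancL => //; rewrite e; exact: lcp_prefl.
- apply/ancL => //; rewrite e; exact: lcp_prefr.
- move=> a /ancL h1 /ancL h2; apply/ancL => //; rewrite e; apply: lcp_max; [exact: h1 | exact: h2].
Qed.


Lemma exP_conv (T : finType) (par : T -> option T) x :
  (exists k, up_iter par k x = None) -> exists k, up_iter par k x == None.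
Proof. by move=> [k hk]; exists k; apply/eqP. Qed.

Definition Dp (T : finType) (par : T -> option T) (H : forall x, exists k, up_iter par k x = None) (x : T) : nat :=
  ex_minn (exP_conv (H x)).

Lemma up_iterSr (T : finType) (par : T -> option T) k x :
  up_iter par k.+1 x = if par x is Some p then up_iter par k p else None.
Proof.
rewrite /up_iter iterSr /=; case: (par x) => [p|] //.
by elim: k => //= k ->.
Qed.

Lemma Dp_pos (T : finType) par H (x : T) : 0 < @Dp T par H x.
Proof. rewrite /Dp; case: ex_minnP => [[|m]] //. Qed.

Lemma Dp_par (T : finType) par H (x p : T) : par x = Some p -> @Dp T par H x = (Dp H p).+1.
Proof.
move=> e; rewrite /Dp; case: ex_minnP => a ha ma; case: ex_minnP => b hb mb.
case: a ha ma => [|a] ha ma //.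
rewrite up_iterSr e in ha.
have h1 := mb _ ha.
have : up_iter par b.+1 x == None by rewrite up_iterSr e.
move/ma => h2. apply/eqP; rewrite eqn_leq; apply/andP; split; lia.
Qed.

Lemma Dp_root (T : finType) par H (x : T) : par x = None -> @Dp T par H x = 1.
Proof.
move=> e; rewrite /Dp; case: ex_minnP => a ha ma.
have : up_iter par 1 x == None by rewrite up_iterSr e.
move/ma; case: a ha ma => [|[|a]] //.
Qed.

Definition bitp n (par : 'I_n -> option 'I_n) (p x : 'I_n) : bool :=
  [exists c : 'I_n, (par c == Some p) && (c < x)].

Fixpoint psif n (par : 'I_n -> option 'I_n) (f : nat) (x : 'I_n) : seq bool :=
  match f with
  | 0 => [::]
  | f'.+1 => if par x is Some p then rcons (psif par f' p) (bitp par p x) else [::]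
  end.

Definition psi n par H (x : 'I_n) := psif par (@Dp _ par H x).-1 x.

Lemma psi_par n par (H : forall x : 'I_n, exists k, up_iter par k x = None) (x p : 'I_n) : par x = Some p -> psi H x = rcons (psi H p) (bitp par p x).
Proof.
move=> e; rewrite /psi (Dp_par H e) /=.
have := Dp_pos H p; case: (Dp H p) => [|d] //= _.
by rewrite e.
Qed.

Lemma psi_root n par (H : forall x : 'I_n, exists k, up_iter par k x = None) (x : 'I_n) : par x = None -> psi H x = [::].
Proof. by move=> e; rewrite /psi (Dp_root H e). Qed.

Lemma psi_nil n par (H : forall x : 'I_n, exists k, up_iter par k x = None) (x : 'I_n) : (psi H x == [::]) = (par x == None).
Proof.
case e: (par x) => [p|]; last by rewrite psi_root.
by rewrite (psi_par H e); case: (psi H p).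
Qed.

Lemma size_psi n par (H : forall x : 'I_n, exists k, up_iter par k x = None) (x : 'I_n) : size (psi H x) = (Dp H x).-1.
Proof.
move: {2}(Dp H x) (erefl (Dp H x)) => d; elim: d x => [|d IH] x e.
  by have := Dp_pos H x; rewrite e.
case ep: (par x) => [p|]; last by rewrite psi_root // (Dp_root H ep).
have e2 := Dp_par H ep.
have hp : Dp H p = d by rewrite e2 in e; case: e.
rewrite (psi_par H ep) size_rcons (IH p hp) e2 hp.
have := Dp_pos H p; rewrite hp; lia.
Qed.

Lemma card3 (T : finType) (A : {set T}) c a b : c \in A -> a \in A -> b \in A ->
  c != a -> c != b -> a != b -> 2 < #|A|.
Proof.
move=> hc ha hb n1 n2 n3.
rewrite (cardD1 c) hc (cardD1 a) !inE eq_sym n1 ha (cardD1 b) !inE eq_sym n3 eq_sym n2 hb.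
done.
Qed.

Lemma binary_eq n (par : 'I_n -> option 'I_n) (Hb : is_binary par) (x y p : 'I_n) :
  par x = Some p -> par y = Some p -> bitp par p x = bitp par p y -> x = y.
Proof.
move=> ex ey eb; apply/eqP; apply/negPn/negP => nxy.
have three : forall c a b : 'I_n, par c = Some p -> par a = Some p -> par b = Some p ->
    c != a -> c != b -> a != b -> False.
  move=> c a b hc ha hb n1 n2 n3.
  have := card3 (A := children par p) (c := c) (a := a) (b := b).
  rewrite !inE hc ha hb !eqxx => /(_ isT isT isT n1 n2 n3).
  have := Hb p; lia.
case bx: (bitp par p x) eb => eb.
- move: bx; rewrite /bitp => /existsP [c /andP [/eqP hc hcx]].
  move: eb => /esym /existsP [c' /andP [/eqP hc' hcy]].
  case: (ltngtP x y) => hxy; last by move: nxy; rewrite (ord_inj hxy) eqxx.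
  + apply: (three c x y) => //; apply/eqP => e; subst; lia.
  + apply: (three c' y x) => //; apply/eqP => e; subst; lia.
- move: bx eb; rewrite /bitp => /negbT /existsPn hx /esym /negbT /existsPn hy.
  have := hx y; have := hy x; rewrite ex ey !eqxx /= => h1 h2.
  case: (ltngtP x y) h1 h2 => //= e _ _. by move: nxy; rewrite (ord_inj e) eqxx.
Qed.

Lemma psi_inj n (par : 'I_n -> option 'I_n) (H : forall x : 'I_n, exists k, up_iter par k x = None)
  (Hr : exists r, forall x, par x = None <-> x = r) (Hb : is_binary par) : injective (psi H).
Proof.
move=> x y e.
move: {2}(size (psi H x)) (erefl (size (psi H x))) => d.
elim: d x y e => [|d IH] x y e hs.
- have hx : par x == None by rewrite -psi_nil -size_eq0 hs.
  have hy : par y == None by rewrite -psi_nil -e -size_eq0 hs.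
  have [r hr] := Hr.
  by rewrite (proj1 (hr x) (eqP hx)) (proj1 (hr y) (eqP hy)).
- case ex: (par x) => [p|]; last by rewrite psi_root in hs.
  case ey: (par y) => [q|].
  + rewrite (psi_par H ex) (psi_par H ey) in e.
    case: (rcons_inj e) => e1 e2.
    have epq : p = q.
      apply: IH => //. by move: hs; rewrite (psi_par H ex) size_rcons => -[].
    subst q. exact: (binary_eq Hb ex ey e2).
  + by move: hs; rewrite e psi_root.
Qed.

Lemma up_iter_par n (par : 'I_n -> option 'I_n) k (x p : 'I_n) :
  par x = Some p -> up_iter par k.+1 x = up_iter par k p.
Proof. by move=> e; rewrite up_iterSr e. Qed.

Lemma anc_par n (par : 'I_n -> option 'I_n) (a x p : 'I_n) :
  par x = Some p -> ancestor par a p -> ancestor par a x.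
Proof. by move=> e [k hk]; exists k.+1; rewrite (up_iter_par _ e). Qed.

Lemma psi_take n (par : 'I_n -> option 'I_n) (H : forall x : 'I_n, exists k, up_iter par k x = None)
  (x : 'I_n) k : exists a, psi H a = take k (psi H x) /\ ancestor par a x.
Proof.
move: {2}(size (psi H x)) (erefl (size (psi H x))) => d.
elim: d x => [|d IH] x hs.
  exists x; split; last by exists 0.
  by rewrite take_oversize // hs.
case: (leqP (size (psi H x)) k) => hk.
  exists x; split; [by rewrite take_oversize | by exists 0].
case ex: (par x) => [p|]; last by rewrite psi_root in hs.
have hsp : size (psi H p) = d by move: hs; rewrite (psi_par H ex) size_rcons => -[].
have [a [e1 e2]] := IH p hsp.
exists a; split; last exact: anc_par ex e2.
rewrite e1 (psi_par H ex) -cats1 takel_cat //; lia.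
Qed.

Lemma anc_prefix n (par : 'I_n -> option 'I_n) (H : forall x : 'I_n, exists k, up_iter par k x = None)
  (a x : 'I_n) : ancestor par a x -> prefix (psi H a) (psi H x).
Proof.
move=> [k]; elim: k x => [|k IH] x.
  by move=> [->]; apply: prefix_refl.
rewrite up_iterSr; case ex: (par x) => [p|] // h.
apply: prefix_trans (IH p h) _.
rewrite (psi_par H ex); exact: prefix_rcons.
Qed.

Lemma prefix_anc n (par : 'I_n -> option 'I_n) (H : forall x : 'I_n, exists k, up_iter par k x = None)
  (Hr : exists r, forall x, par x = None <-> x = r) (Hb : is_binary par)
  (a x : 'I_n) : prefix (psi H a) (psi H x) -> ancestor par a x.
Proof.
move=> hp; have [a' [e1 e2]] := psi_take H x (size (psi H a)).
have : psi H a' = psi H a by rewrite e1; move: hp; rewrite prefixE => /eqP.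
by move/(psi_inj Hr Hb) => <-.
Qed.

Lemma nca_lcp n (par : 'I_n -> option 'I_n) (H : forall x : 'I_n, exists k, up_iter par k x = None)
  (Hr : exists r, forall x, par x = None <-> x = r) (Hb : is_binary par)
  (u v w : 'I_n) : is_nca par u v w -> psi H w = lcp (psi H u) (psi H v).
Proof.
move=> [h1 [h2 h3]].
apply: prefix_antisym.
  apply: lcp_max; exact: anc_prefix.
have [a [e1 e2]] := psi_take H u (size (lcp (psi H u) (psi H v))).
have ea : psi H a = lcp (psi H u) (psi H v).
  by rewrite e1; move: (lcp_prefl (psi H u) (psi H v)); rewrite prefixE => /eqP.
have e3 : ancestor par a v by apply: (prefix_anc Hr Hb); rewrite ea; apply: lcp_prefr.
rewrite -ea; apply: anc_prefix; exact: h3.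
Qed.


Fixpoint tos (f : nat) (P : seq bool -> bool) : bt :=
  match f with
  | 0 => BE
  | f'.+1 => if P [::] then BN (tos f' (fun w => P (false :: w))) (tos f' (fun w => P (true :: w))) else BE
  end.

Lemma nodes_tos (f : nat) (P : seq bool -> bool) : (forall w k, P w -> P (take k w)) -> (forall w, P w -> size w < f) ->
  forall w, (w \in nodes (tos f P)) = P w.
Proof.
elim: f P => [|f IH] P hc hs w /=.
  by apply/esym/negbTE/negP => /hs.
case h0: (P [::]); last first.
  by apply/esym/negbTE/negP => /(hc _ 0); rewrite take0 h0.
rewrite mem_nodesN; case: w => [|[] w] //.
- rewrite IH //.
  + by move=> v k /(hc _ k.+1).
  + by move=> v /hs.
- rewrite IH //.
  + by move=> v k /(hc _ k.+1).
  + by move=> v /hs.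
Qed.

Lemma univ_words n (par : 'I_n -> option 'I_n) : is_rooted_tree par -> is_binary par ->
  exists g : 'I_n -> seq bool,
    [/\ forall x, g x \in nodes (Bf n.+1 n), injective g &
        forall u v w, is_nca par u v w -> g w = lcp (g u) (g v)].
Proof.
move=> [Hr H] Hb.
set S := [seq psi H x | x <- enum 'I_n].
have [fu hfu] : exists fu, forall x, size (psi H x) < fu.
  exists (\max_(x : 'I_n) size (psi H x)).+1 => x; rewrite ltnS.
  exact: leq_bigmax.
set t := tos fu (fun w => w \in S).
have hinS : forall x, psi H x \in S by move=> x; apply: map_f; rewrite mem_enum.
have Nt : forall w, (w \in nodes t) = (w \in S).
  apply: nodes_tos.
  - move=> w k /mapP [x _ ->]; have [a [e1 _]] := psi_take H x k; rewrite -e1; exact: hinS.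
  - move=> w /mapP [x _ ->]; exact: hfu.
have St : bsize t = n.
  rewrite -size_nodes.
  have -> : size (nodes t) = size S.
    apply: perm_size; apply: uniq_perm; first exact: nodes_uniq.
    - rewrite map_inj_uniq ?enum_uniq //; exact: psi_inj.
    - exact: Nt.
  by rewrite size_map size_enum_ord.
have he : emb t (Bf n.+1 n) by apply: B_univ; rewrite ?St.
have [f [G1 G2 G3]] := emb_map he.
have hin : forall x, psi H x \in nodes t by move=> x; rewrite Nt.
exists (fun x => f (psi H x)); split.
- move=> x; exact: G1.
- move=> x y e; apply: (psi_inj Hr Hb); exact: G3.
- move=> u v w hn; rewrite (nca_lcp H Hr Hb hn) G2 //.
Qed.

Fixpoint enc (l k : nat) : seq bool :=
  match l with 0 => [::] | l'.+1 => odd k :: enc l' k./2 end.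

Fixpoint decn (s : seq bool) : nat :=
  match s with [::] => 0 | b :: s' => b + (decn s').*2 end.

Lemma size_enc l k : size (enc l k) = l.
Proof. by elim: l k => [|l IH] k //=; rewrite IH. Qed.

Lemma decn_enc l k : k < expn 2 l -> decn (enc l k) = k.
Proof.
elim: l k => [|l IH] k /=; first by rewrite expn0; case: k.
move=> hk; rewrite IH ?odd_double_half //.
rewrite expnS in hk; rewrite -divn2 ltn_divLR //; lia.
Qed.

Lemma Rceil_ge x : (x <= IZR (Rceil x))%R.
Proof.
rewrite /Rceil minus_IZR; have [h1 h2] := archimed (- x). lra.
Qed.

Lemma Rceil_nonneg x : (0 <= x)%R -> (0 <= Rceil x)%Z.
Proof.
move=> hx; have h := Rceil_ge x.
apply: le_IZR; lra.
Qed.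

Lemma INR_expn2 k : INR (expn 2 k) = (2 ^ k)%R.
Proof.
elim: k => [|k IH]; first by rewrite expn0.
by rewrite expnS INR_muln IH /=; simpl; lra.
Qed.

Lemma log2_nonneg n : (1 <= INR n)%R -> (0 <= log2 (INR n))%R.
Proof.
move=> h; rewrite /log2.
have h2 : (0 < ln 2)%R by have := ln_lt_2; lra.
have hn : (0 <= ln (INR n))%R.
  case: (Rle_lt_or_eq_dec _ _ h) => h'; last by rewrite -h' ln_1; lra.
  rewrite -ln_1; apply: Rlt_le; apply: ln_increasing; lra.
apply: Rmult_le_pos => //; apply: Rlt_le; apply: Rinv_0_lt_compat => //.
Qed.

Lemma Rpower_2_log2 x : (0 < x)%R -> Rpower 2 (log2 x) = x.
Proof.
move=> hx; rewrite /Rpower /log2.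
have h2 : (0 < ln 2)%R by have := ln_lt_2; lra.
have -> : (ln x / ln 2 * ln 2 = ln x)%R by field; lra.
by rewrite exp_ln.
Qed.

Lemma bound_bits (m n : nat) : (0 < n)%nat -> (INR m <= Rpower (INR n) 1.894)%R ->
  m <= expn 2 (Z.to_nat (Rceil (1.894 * log2 (INR n)))).
Proof.
move=> hn hm.
have hn1 : (1 <= INR n)%R by have := INR_leq (hn : (1 <= n)%nat); rewrite INR1.
set z := Rceil _.
have hz : (0 <= z)%Z by apply: Rceil_nonneg; apply: Rmult_le_pos; [lra | exact: log2_nonneg].
have : (INR m <= INR (expn 2 (Z.to_nat z)))%R.
  rewrite INR_expn2 -Rpower_pow; last lra.
  rewrite (INR_IZR_INZ (Z.to_nat z)) Z2Nat.id //.
  apply: (Rle_trans _ _ _ hm).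
  rewrite -{1}(Rpower_2_log2 (x := INR n)); last lra.
  rewrite Rpower_mult Rmult_comm.
  apply: Rle_Rpower; first lra.
  exact: Rceil_ge.
by move/INR_le/leP.
Qed.

Unset Implicit Arguments.

Lemma U_nonempty n : 0 < n -> [::] \in nodes (Bf n.+1 n).
Proof.
move=> hn; have : emb (BN BE BE) (Bf n.+1 n) by apply: B_univ.
by case: (Bf n.+1 n) => // h; inversion h.
Qed.

Lemma U_size n : 0 < n -> (INR (size (nodes (Bf n.+1 n))) <= Rpower (INR n) 1.894)%R.
Proof.
move=> hn; rewrite size_nodes.
apply: Rle_trans (B_size (f := n.+1) (n := n) (ltnSn n)) _.
have hn1 : (1 <= INR n)%R by have := INR_leq (hn : (1 <= n)%nat); rewrite INR1.
rewrite pw_pos; last lra.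
apply: Rle_Rpower => //. rewrite /al /Q2R /=. lra.
Qed.

Theorem mainTheorem1 :
  forall n : nat, 0 < n ->
  (* universal tree for binary rooted trees on n nodes *)
  (exists (m : nat) (parU : 'I_m -> option 'I_m),
      is_rooted_tree parU /\
      (INR m <= Rpower (INR n) 1.894)%R /\
      forall parT : 'I_n -> option 'I_n,
        is_rooted_tree parT -> is_binary parT -> top_minor parT parU)
  /\
  (* NCA labeling scheme with labels of at most ceil(1.894 log2 n) bits *)
  (exists dec : seq bool -> seq bool -> seq bool,
      forall parT : 'I_n -> option 'I_n,
        is_rooted_tree parT -> is_binary parT ->
        exists lab : 'I_n -> seq bool,
          injective lab /\
          (forall u, (Z.of_nat (size (lab u)) <= Rceil (1.894 * log2 (INR n)))%Z) /\
          (forall u v w, is_nca parT u v w -> dec (lab u) (lab v) = lab w)).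
Proof.
move=> n hn.
set L := nodes (Bf n.+1 n).
have HU : uniq L by apply: nodes_uniq.
have HP : pclosed L by move=> w k; apply: nodes_take.
have h0 : [::] \in L by apply: U_nonempty.
have hsz := U_size n hn.
set r : 'I_(size L) := Ordinal (introT idP (etrans (index_mem [::] L) h0)).
have hr : chi r = [::] by rewrite /chi /= nth_index.
split.
- exists (size L), (@parL L); split; first exact: rootedL hr.
  split; first exact: hsz.
  move=> parT hT hB.
  have [g [G1 G2 G3]] := univ_words hT hB.
  exists (fun x => insubd r (index (g x) L)); split.
  + move=> x y e; apply: G2.
    by rewrite -(chi_insubd r (G1 x)) -(chi_insubd r (G1 y)) e.
  + move=> u v w hn'; apply: ncaL => //.
    by rewrite !chi_insubd //; apply: G3.
- set l0 := Z.to_nat (Rceil (1.894 * log2 (INR n))).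
  have hb : size L <= expn 2 l0 by apply: bound_bits.
  exists (fun l1 l2 => enc l0 (index (lcp (nth [::] L (decn l1)) (nth [::] L (decn l2))) L)).
  move=> parT hT hB.
  have [g [G1 G2 G3]] := univ_words hT hB.
  have hi : forall x, index (g x) L < expn 2 l0.
    by move=> x; apply: leq_trans hb; rewrite index_mem.
  exists (fun x => enc l0 (index (g x) L)); split; [|split].
  + move=> x y e; apply: G2.
    have := f_equal decn e; rewrite !decn_enc // => e'.
    by rewrite -(nth_index [::] (G1 x)) e' nth_index.
  + move=> u; rewrite size_enc /l0 Z2Nat.id; first exact: Z.le_refl.
    apply: Rceil_nonneg; apply: Rmult_le_pos; first lra.
    apply: log2_nonneg. by have := INR_leq (hn : (1 <= n)%nat); rewrite INR1.
  + move=> u v w hn'; rewrite !decn_enc // !nth_index //.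
    by rewrite (G3 _ _ _ hn').
Qed.
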